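(* Let $H$ be a CAT($-1$) space and let $\Phi\in\mathcal{H}$ have Hölder constant $L$ and Hölder exponent $\beta$. Then there exists a function $\hat D:\mathbb{R}_{\geq0}\to\mathbb{R}$, depending only on $L$ and $\beta$, such that for any $p\in H$, any two geodesics $\gamma_1,\gamma_2\in SH$ with $\gamma_1(0)=\gamma_2(0)=p$, and any $T\geq 0$, $r\geq0$ with $d(\gamma_1(T),\gamma_2(T))\leq r$, we have $|d^\Phi(p,\gamma_1(T))-d^\Phi(p,\gamma_2(T))|\leq\hat D(r)$.
   Context: $SH$ is the space of unit speed bi-infinite geodesics $\gamma:\mathbb{R}\to H$ with metric $\operatorname{dist}(\gamma_1,\gamma_2)=\frac12\int_{-\infty}^{\infty}d(\gamma_1(t),\gamma_2(t))e^{-|t|}dt$ and geodesic flow $\mathsf g^t\gamma(s)=\gamma(s+t)$; every geodesic segment is assumed to extend to a bi-infinite geodesic. $\mathcal{H}$ is the set of bounded Hölder functions $\Phi:(SH,\operatorname{dist})\to\mathbb{R}$ with $\Phi(\gamma_1)=\Phi(\gamma_2)$ whenever $\gamma_1|_{[0,\epsilon]}=\gamma_2|_{[0,\epsilon]}$ for some $\epsilon>0$. For $p\neq q$, $d^\Phi(p,q)=\int_0^{d(p,q)}\Phi(\mathsf g^t\gamma_{p,q})dt$ where $\gamma_{p,q}\in SH$ is any geodesic with $\gamma_{p,q}(0)=p$, $\gamma_{p,q}(d(p,q))=q$ (and $d^\Phi(p,p)=0$). *)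

(* Defs.v *)
From Stdlib Require Import Reals Lra ClassicalEpsilon.
From Coquelicot Require Import Coquelicot.
Open Scope R_scope.
Set Implicit Arguments.

Section Defs.
Variable H : Type.
Variable d : H -> H -> R.

Definition is_metric : Prop :=
  (forall x y, d x y = 0 <-> x = y) /\
  (forall x y, d x y = d y x) /\
  (forall x y z, d x z <= d x y + d y z).

Definition geod_seg (c : R -> H) (a b : R) : Prop :=
  forall s t, a <= s <= b -> a <= t <= b -> d (c s) (c t) = Rabs (s - t).

Definition geodesic_space : Prop :=
  forall x y, exists c : R -> H, c 0 = x /\ c (d x y) = y /\ geod_seg c 0 (d x y).

(* CAT(-1): for every geodesic triangle with vertex x and opposite side a
   geodesic segment c from y = c 0 to z = c a, and every point c t of that side,
   d(x, c t) is at most the corresponding distance in the comparison triangle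
   in the hyperbolic plane H^2, which (hyperbolic Stewart formula) is given by
   cosh dbar * sinh a = cosh (d x y) * sinh (a - t) + cosh (d x z) * sinh t. *)
Definition CAT_m1 : Prop :=
  is_metric /\ geodesic_space /\
  forall (x : H) (c : R -> H) (a t : R), 0 <= a -> geod_seg c 0 a -> 0 <= t <= a ->
    cosh (d x (c t)) * sinh a <=
      cosh (d x (c 0)) * sinh (a - t) + cosh (d x (c a)) * sinh t.

Record SH := mkSH { geo :> R -> H; geoP : forall s t, d (geo s) (geo t) = Rabs (s - t) }.

Definition geodesically_complete : Prop :=
  forall (c : R -> H) (a b : R), a <= b -> geod_seg c a b ->
    exists g : SH, forall s, a <= s <= b -> g s = c s.

Lemma flow_proof (t : R) (g : SH) :
  forall s u, d (g (s + t)) (g (u + t)) = Rabs (s - u).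
Proof. intros s u. rewrite geoP. f_equal. ring. Qed.

Definition flow (t : R) (g : SH) : SH := mkSH (fun s => g (s + t)) (flow_proof t g).

(* dist(g1,g2) = 1/2 int_{-oo}^{oo} d(g1 t, g2 t) e^{-|t|} dt,
   the improper integral of a nonnegative integrand as limit of integrals over [-n,n] *)
Definition distSH (g1 g2 : SH) : R :=
  / 2 * real (Lim_seq (fun n : nat =>
      RInt (fun t => d (g1 t) (g2 t) * exp (- Rabs t)) (- INR n) (INR n))).

(* x^b for x >= 0 (with 0^b = 0 for b > 0) *)
Definition hpow (x b : R) : R := if Rle_dec x 0 then 0 else Rpower x b.

Definition Hoelder (Phi : SH -> R) (L b : R) : Prop :=
  forall g1 g2, Rabs (Phi g1 - Phi g2) <= L * hpow (distSH g1 g2) b.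

(* the class \mathcal H (Hoelder part recorded separately via Hoelder) *)
Definition in_calH (Phi : SH -> R) : Prop :=
  (exists M, forall g, Rabs (Phi g) <= M) /\
  (exists L b, 0 < b <= 1 /\ Hoelder Phi L b) /\
  (forall g1 g2 : SH, forall eps, 0 < eps ->
     (forall t, 0 <= t <= eps -> g1 t = g2 t) -> Phi g1 = Phi g2).

Definition dPhi (Phi : SH -> R) (p q : H) : R :=
  epsilon (inhabits 0) (fun v =>
    (p = q /\ v = 0) \/
    (p <> q /\ exists g : SH, g 0 = p /\ g (d p q) = q /\
        v = RInt (fun t => Phi (flow t g)) 0 (d p q))).

End Defs.

(* Main.v *)
Require Import Defs.
From Stdlib Require Import Reals Lra ClassicalEpsilon.
From Coquelicot Require Import Coquelicot.
Open Scope R_scope.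
Set Implicit Arguments.
Definition w (s : R) := 2 / (exp (s/2) + exp (- (s/2))).
Lemma w_cont x : continuous w x.
Proof.
  apply (@ex_derive_continuous R_AbsRing R_NormedModule). unfold w. auto_derive.
  assert (0 < exp (x/2)) by apply exp_pos. assert (0 < exp (-(x/2))) by apply exp_pos. lra.
Qed.
Lemma w_is_RInt a b : is_RInt w a b (4 * atan (exp (b/2)) - 4 * atan (exp (a/2))).
Proof.
  replace (4 * atan (exp (b/2)) - 4 * atan (exp (a/2))) with
    (minus ((fun s => 4 * atan (exp (s/2))) b) ((fun s => 4 * atan (exp (s/2))) a)) by reflexivity.
  apply (is_RInt_derive (fun s => 4 * atan (exp (s/2))) w a b).
  - intros x _. auto_derive. auto. unfold w. rewrite exp_Ropp.
    assert (0 < exp (x/2)) by apply exp_pos. unfold Rdiv in *. set (E := exp (x * /2)) in *.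
    field. split; [lra|]. nra.
  - intros y _. apply w_cont.
Qed.
Lemma w_RInt_le a b : a <= b -> ex_RInt w a b /\ RInt w a b <= 4 * PI.
Proof.
  intros Hab. split. eexists; apply w_is_RInt.
  rewrite (is_RInt_unique _ _ _ _ (w_is_RInt a b)).
  pose proof (atan_bound (exp (b/2))). pose proof (atan_bound (exp (a/2))). lra.
Qed.
Lemma w_pos s : 0 < w s.
Proof. unfold w. assert (0 < exp (s/2)) by apply exp_pos. assert (0 < exp (-(s/2))) by apply exp_pos.
  apply Rdiv_lt_0_compat; lra. Qed.

Lemma cont_eps (f : R -> R) x :
  (forall eps, 0 < eps -> exists delta, 0 < delta /\ forall y, Rabs (y - x) < delta -> Rabs (f y - f x) < eps) ->
  continuous f x.
Proof.
  intros Hf. apply continuity_pt_filterlim. apply continuity_pt_locally.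
  intros eps. destruct (Hf eps (cond_pos eps)) as [del [Hd Hy]].
  exists (mkposreal del Hd). intros y Hb. apply Hy. exact Hb.
Qed.
Lemma exp_le x y : x <= y -> exp x <= exp y.
Proof. intros [H|H]. left; now apply exp_increasing. subst; lra. Qed.

Lemma d_sym H (d : H -> H -> R) : is_metric d -> forall x y, d x y = d y x.
Proof. intros [_ [h _]]; exact h. Qed.
Lemma d_tri H (d : H -> H -> R) : is_metric d -> forall x y z, d x z <= d x y + d y z.
Proof. intros [_ [_ h]]; exact h. Qed.
Lemma d_refl H (d : H -> H -> R) : is_metric d -> forall x, d x x = 0.
Proof. intros [h _] x. now apply h. Qed.
Lemma d_nonneg H (d : H -> H -> R) : is_metric d -> forall x y, 0 <= d x y.
Proof. intros Hm x y. pose proof (d_tri Hm x y x). rewrite (d_refl Hm), (d_sym Hm y x) in H0. lra. Qed.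

Lemma real_Lim_le (u : nat -> R) B : 0 <= B -> (forall n, u n <= B) -> real (Lim_seq u) <= B.
Proof.
  intros HB Hu. assert (Hl : Rbar_le (Lim_seq u) (Lim_seq (fun _ => B))).
  { apply Lim_seq_le_loc. exists 0%nat. intros; apply Hu. }
  rewrite Lim_seq_const in Hl. destruct (Lim_seq u); simpl in *; lra.
Qed.

Lemma distSH_bound H (d : H -> H -> R) (g1 g2 : SH d) M : is_metric d -> 0 <= M ->
  (forall s, d (g1 s) (g2 s) <= M * exp (Rabs s / 2)) -> distSH g1 g2 <= 8 * M.
Proof.
  intros Hm HM Hb. unfold distSH.
  assert (Hc : forall x, continuous (fun t => d (g1 t) (g2 t) * exp (- Rabs t)) x).
  { intros x. apply (continuous_mult (K := R_AbsRing) (fun t => d (g1 t) (g2 t)) (fun t => exp (- Rabs t))).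
    - apply cont_eps. intros eps Heps. exists (eps/2). split. lra. intros y Hy.
      pose proof (d_tri Hm (g1 y) (g1 x) (g2 y)). pose proof (d_tri Hm (g1 x) (g2 x) (g2 y)).
      pose proof (d_tri Hm (g1 x) (g1 y) (g2 x)). pose proof (d_tri Hm (g1 y) (g2 y) (g2 x)).
      rewrite !geoP in *.
      rewrite (Rabs_minus_sym x y) in *. apply Rabs_lt_between. lra.
    - apply continuous_exp_comp. apply (continuous_comp Rabs Ropp). apply continuous_Rabs.
      apply continuity_pt_filterlim. apply continuity_pt_opp. apply continuity_pt_id. }
  cut (real (Lim_seq (fun n : nat => RInt (fun t => d (g1 t) (g2 t) * exp (- Rabs t)) (- INR n) (INR n))) <= 16 * M).
  { intros; lra. }
  apply real_Lim_le. lra. intros n.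
  assert (Hn : - INR n <= INR n) by (pose proof (pos_INR n); lra).
  destruct (w_RInt_le Hn) as [Hw1 Hw2].
  apply Rle_trans with (RInt (fun s => M * w s) (- INR n) (INR n)).
  - apply RInt_le. exact Hn. apply (ex_RInt_continuous (V := R_CompleteNormedModule)). intros; apply Hc.
    apply (ex_RInt_scal (V := R_CompleteNormedModule) w (-INR n) (INR n) M). exact Hw1.
    intros s _. apply Rle_trans with (M * exp (Rabs s / 2) * exp (- Rabs s)).
    apply Rmult_le_compat_r. left; apply exp_pos. apply Hb.
    rewrite Rmult_assoc. apply Rmult_le_compat_l. exact HM.
    rewrite <- exp_plus. unfold w.
    assert (0 < exp (s/2)) by apply exp_pos. assert (0 < exp (-(s/2))) by apply exp_pos.
    apply Rle_div_r. lra.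
    rewrite Rmult_plus_distr_l, <- !exp_plus.
    assert (exp (Rabs s / 2 + - Rabs s + s / 2) <= 1).
    { rewrite <- exp_0. apply exp_le. unfold Rabs; destruct Rcase_abs; lra. }
    assert (exp (Rabs s / 2 + - Rabs s + - (s / 2)) <= 1).
    { rewrite <- exp_0. apply exp_le. unfold Rabs; destruct Rcase_abs; lra. }
    lra.
  - pose proof (RInt_scal (V := R_CompleteNormedModule) w (-INR n) (INR n) M) as E.
    unfold scal in E; simpl in E. unfold mult in E; simpl in E. rewrite (E Hw1). pose proof PI_4. nra.
Qed.
Lemma exp_ge1 x : 0 <= x -> 1 <= exp x.
Proof. intros. pose proof (exp_ineq1_le x). lra. Qed.

Lemma cosh_mono x y : 0 <= x <= y -> cosh x <= cosh y.
Proof.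
  intros [Hx Hxy]. unfold cosh. rewrite !exp_Ropp.
  pose proof (exp_ge1 Hx). pose proof (exp_le Hxy).
  set (X := exp x) in *. set (Y := exp y) in *.
  assert (Y + / Y - (X + / X) = (Y - X) * (X * Y - 1) / (X * Y)) by (field; lra).
  assert (0 <= (Y - X) * (X * Y - 1) / (X * Y)).
  { apply Rdiv_le_0_compat. apply Rmult_le_pos; nra. nra. }
  lra.
Qed.

Lemma cosh_quad D : 0 <= D -> D * D <= 8 * (cosh D - 1).
Proof.
  intros HD. unfold cosh.
  assert (E1 : exp D = exp (D/2) * exp (D/2)) by (rewrite <- exp_plus; f_equal; field).
  assert (E2 : exp (-D) = / exp (D/2) * / exp (D/2)) by (rewrite <- !exp_Ropp, <- exp_plus; f_equal; field).
  rewrite E1, E2.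
  pose proof (exp_ineq1_le (D/2)). set (X := exp (D/2)) in *.
  assert (1 <= X) by lra. assert (0 < / X <= 1).
  { split. apply Rinv_0_lt_compat; lra. rewrite <- Rinv_1. apply Rinv_le_contravar; lra. }
  assert (XX : X * / X = 1) by (field; lra).
  assert (X * X + / X * / X - 2 = (X - / X) * (X - / X)) by nra.
  assert (D/2 <= X - / X) by lra. nra.
Qed.

Lemma hyp_ident T u : 
  cosh u * sinh (T - u) * sinh T + sinh u * (cosh T * sinh (T - u)) + sinh u * sinh u = sinh T * sinh T.
Proof.
  unfold cosh, sinh.
  assert (E1 : exp (T - u) = exp T * / exp u) by (rewrite <- exp_Ropp, <- exp_plus; f_equal).
  assert (E2 : exp (-(T - u)) = / exp T * exp u) by (rewrite <- exp_Ropp, <- exp_plus; f_equal; ring).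
  rewrite E1, E2, !exp_Ropp.
  assert (0 < exp T) by apply exp_pos. assert (0 < exp u) by apply exp_pos.
  field. lra.
Qed.
Lemma sinh_pos T : 0 < T -> 0 < sinh T.
Proof. intros. unfold sinh. assert (exp (-T) < exp T) by (apply exp_increasing; lra). lra. Qed.
Lemma sinh_nonneg T : 0 <= T -> 0 <= sinh T.
Proof. intros [H|H]. left; now apply sinh_pos. subst. unfold sinh. rewrite Ropp_0. lra. Qed.

Lemma ratio_bound T u : 0 <= u <= T -> sinh u * exp T <= sinh T * exp u.
Proof.
  intros [Hu HT]. unfold sinh. rewrite !exp_Ropp.
  pose proof (exp_ge1 Hu). pose proof (exp_le HT).
  set (a := exp T) in *. set (b := exp u) in *.
  assert (E : (a - / a) / 2 * b - (b - / b) / 2 * a = (a * a - b * b) / (2 * a * b)) by (field; lra).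
  assert (0 <= (a * a - b * b) / (2 * a * b)).
  { apply Rdiv_le_0_compat. nra. nra. }
  lra.
Qed.

Definition Kc (r : R) := 1 + 8 * (cosh r - 1).

Lemma geo_bound H (d : H -> H -> R) (h1 h2 : SH d) T r :
  CAT_m1 d -> h1 0 = h2 0 -> 0 < T -> 0 <= r -> d (h1 T) (h2 T) <= r ->
  forall u, 0 <= u <= T -> d (h1 u) (h2 u) <= Kc r * exp (u - T).
Proof.
  intros [Hm [_ Hc]] H0 HT Hr HTr u Hu.
  assert (G1 : geod_seg d h1 0 T) by (intros s t _ _; apply geoP).
  assert (G2 : geod_seg d h2 0 T) by (intros s t _ _; apply geoP).
  pose proof (Hc (h2 T) h1 T u (Rlt_le _ _ HT) G1 Hu) as S1.
  pose proof (Hc (h1 u) h2 T u (Rlt_le _ _ HT) G2 Hu) as S2.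
  rewrite <- H0, (geoP h1 u 0) in S2.
  rewrite (d_sym Hm (h2 T) (h1 0)), H0, (geoP h2 0 T), (d_sym Hm (h2 T) (h1 u)), (d_sym Hm (h2 T) (h1 T)) in S1.
  replace (Rabs (u - 0)) with u in S2 by (rewrite Rminus_0_r, Rabs_right; lra).
  replace (Rabs (0 - T)) with T in S1 by (rewrite Rminus_0_l, Rabs_Ropp, Rabs_right; lra).
  set (A := cosh (d (h1 u) (h2 T))) in *.
  set (D := d (h1 u) (h2 u)) in *.
  assert (Cr : cosh (d (h1 T) (h2 T)) <= cosh r) by (apply cosh_mono; split; [apply (d_nonneg Hm)|lra]).
  assert (sT : 0 < sinh T) by (apply sinh_pos; lra).
  assert (su : 0 <= sinh u) by (apply sinh_nonneg; lra).
  assert (sTu : 0 <= sinh (T - u)) by (apply sinh_nonneg; lra).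
  assert (cr1 : 1 <= cosh r) by (pose proof (cosh_mono (conj (Rle_refl 0) Hr)); rewrite cosh_0 in *; lra).
  pose proof (hyp_ident T u) as Id.
  assert (S1' : A * sinh T <= cosh T * sinh (T - u) + cosh r * sinh u).
  { apply Rle_trans with (1 := S1). apply Rplus_le_compat_l. apply Rmult_le_compat_r; lra. }
  assert (M : cosh D * sinh T * sinh T <= sinh T * sinh T + (cosh r - 1) * (sinh u * sinh u)).
  { assert (cosh D * sinh T * sinh T <= (cosh u * sinh (T - u) + A * sinh u) * sinh T)
      by (apply Rmult_le_compat_r; lra).
    assert (A * sinh T * sinh u <= (cosh T * sinh (T - u) + cosh r * sinh u) * sinh u)
      by (apply Rmult_le_compat_r; lra).
    nra. }
  assert (DD : D * D <= 8 * (cosh D - 1)) by (apply cosh_quad; apply (d_nonneg Hm)).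
  pose proof (ratio_bound (conj (proj1 Hu) (proj2 Hu))) as Rb.
  assert (E : exp (u - T) = exp u / exp T) by (unfold Rdiv; rewrite <- exp_Ropp, <- exp_plus; reflexivity).
  rewrite E. unfold Kc.
  assert (0 < exp T) by apply exp_pos. assert (0 < exp u) by apply exp_pos.
  set (rho := sinh u / sinh T).
  assert (Hrho : rho <= exp u / exp T).
  { unfold rho. apply (Rmult_le_reg_r (sinh T * exp T)); [nra|].
    replace (sinh u / sinh T * (sinh T * exp T)) with (sinh u * exp T) by (field; lra).
    replace (exp u / exp T * (sinh T * exp T)) with (sinh T * exp u) by (field; lra). exact Rb. }
  assert (Hrho0 : 0 <= rho) by (unfold rho; apply Rdiv_le_0_compat; lra).
  assert (Dq : D * D <= 8 * (cosh r - 1) * (rho * rho)).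
  { unfold rho. apply Rle_trans with (1 := DD).
    assert (cosh D - 1 <= (cosh r - 1) * (sinh u * sinh u) / (sinh T * sinh T)).
    { apply (Rmult_le_reg_r (sinh T * sinh T)); [nra|].
      replace ((cosh r - 1) * (sinh u * sinh u) / (sinh T * sinh T) * (sinh T * sinh T))
        with ((cosh r - 1) * (sinh u * sinh u)) by (field; lra). nra. }
    replace (8 * (cosh r - 1) * (sinh u / sinh T * (sinh u / sinh T))) with
      (8 * ((cosh r - 1) * (sinh u * sinh u) / (sinh T * sinh T))) by (field; lra). lra. }
  assert (0 <= D) by apply (d_nonneg Hm).
  assert (Hq : 0 <= exp u / exp T) by (apply Rdiv_le_0_compat; lra).
  set (c := cosh r - 1) in *. set (q := exp u / exp T) in *.
  assert (c0 : 0 <= c) by (unfold c; lra).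
  assert (rho * rho <= q * q) by nra.
  assert (8 * c * (rho * rho) <= 8 * c * (q * q)) by (apply Rmult_le_compat_l; lra).
  assert (8 * c * (q * q) <= ((1 + 8 * c) * q) * ((1 + 8 * c) * q)) by nra.
  assert (D * D <= ((1 + 8 * c) * q) * ((1 + 8 * c) * q)) by lra.
  set (X := (1 + 8 * c) * q) in *. assert (0 <= X) by (unfold X; nra).
  destruct (Rle_or_lt D X) as [HX|HX]. exact HX.
  assert (X * X < D * D) by (apply Rmult_le_0_lt_compat; lra). lra.
Qed.

Lemma Rpower_pos x b : 0 < Rpower x b.
Proof. unfold Rpower. apply exp_pos. Qed.

Lemma hpow_nonneg x b : 0 <= hpow x b.
Proof. unfold hpow. destruct Rle_dec. lra. left; apply Rpower_pos. Qed.

Lemma hpow_pos x b : 0 < x -> hpow x b = Rpower x b.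
Proof. intros. unfold hpow. destruct Rle_dec; [lra|auto]. Qed.

Lemma hpow_mono x y b : 0 <= b -> x <= y -> hpow x b <= hpow y b.
Proof.
  intros Hb Hxy. unfold hpow. destruct (Rle_dec x 0).
  - destruct Rle_dec. lra. left; apply Rpower_pos.
  - destruct Rle_dec. lra. unfold Rpower. apply exp_le. apply Rmult_le_compat_l. lra.
    apply ln_le; lra.
Qed.

Lemma Rpower_ge_self z b : 0 < z <= 1 -> 0 < b <= 1 -> z <= Rpower z b.
Proof.
  intros Hz Hb. unfold Rpower. rewrite <- (exp_ln z) at 1 by lra. apply exp_le.
  assert (ln z <= 0) by (rewrite <- ln_1; apply ln_le; lra). nra.
Qed.

Lemma div_le1 x s : 0 < s -> x <= s -> x / s <= 1.
Proof. intros. apply (Rmult_le_reg_r s); [lra|]. replace (x / s * s) with x by (field; lra). lra. Qed.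

Lemma hpow_add x y b : 0 <= x -> 0 <= y -> 0 < b <= 1 -> hpow (x + y) b <= hpow x b + hpow y b.
Proof.
  intros Hx Hy Hb. destruct Hx as [Hx|Hx]; [|subst; rewrite Rplus_0_l; pose proof (hpow_nonneg 0 b); lra].
  destruct Hy as [Hy|Hy]; [|subst; rewrite Rplus_0_r; pose proof (hpow_nonneg 0 b); lra].
  rewrite !hpow_pos by lra.
  set (s := x + y).
  assert (Ex : x = (x / s) * s) by (unfold s; field; lra).
  assert (Ey : y = (y / s) * s) by (unfold s; field; lra).
  assert (Hxs : 0 < x / s <= 1).
  { unfold s; split. apply Rdiv_lt_0_compat; lra. apply div_le1; lra. }
  assert (Hys : 0 < y / s <= 1).
  { unfold s; split. apply Rdiv_lt_0_compat; lra. apply div_le1; lra. }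
  rewrite Ex at 1. rewrite Ey at 1.
  rewrite <- (Rpower_mult_distr (x/s) s b) by (unfold s in *; lra). rewrite <- (Rpower_mult_distr (y/s) s b) by (unfold s in *; lra).
  pose proof (Rpower_ge_self Hxs Hb). pose proof (Rpower_ge_self Hys Hb).
  assert (x / s + y / s = 1) by (unfold s; field; lra).
  pose proof (Rpower_pos s b). nra.
Qed.

Lemma hpow_exp c z b : 0 < c -> hpow (c * exp z) b = Rpower c b * exp (b * z).
Proof.
  intros Hc. rewrite hpow_pos by (pose proof (exp_pos z); nra).
  rewrite <- Rpower_mult_distr by (auto; apply exp_pos). f_equal.
  unfold Rpower. rewrite ln_exp. reflexivity.
Qed.

Lemma hpow_small C eps b : 0 <= C -> 0 < eps -> 0 < b ->
  exists delta, 0 < delta /\ forall x, x < delta -> C * hpow x b < eps.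
Proof.
  intros HC He Hb. set (y := eps / (C + 1)).
  assert (Hy : 0 < y) by (unfold y; apply Rdiv_lt_0_compat; lra).
  exists (Rpower y (/ b)). split. apply Rpower_pos.
  intros x Hx. apply Rle_lt_trans with (C * hpow (Rpower y (/ b)) b).
  apply Rmult_le_compat_l. lra. apply hpow_mono; lra.
  rewrite hpow_pos by apply Rpower_pos. rewrite Rpower_mult.
  replace (/ b * b) with 1 by (field; lra). rewrite Rpower_1 by lra.
  unfold y. apply (Rmult_lt_reg_r (C + 1)). lra.
  replace (C * (eps / (C + 1)) * (C + 1)) with (C * eps) by (field; lra). nra.
Qed.

Definition Aa (r : R) := Kc r + r + 4.

Lemma Kc_ge1 r : 0 <= r -> 1 <= Kc r.
Proof.
  intros Hr. unfold Kc. pose proof (cosh_mono (conj (Rle_refl 0) Hr)). rewrite cosh_0 in *. lra.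
Qed.

Lemma flow_bound H (d : H -> H -> R) (h1 h2 : SH d) T r :
  CAT_m1 d -> h1 0 = h2 0 -> 0 < T -> 0 <= r -> d (h1 T) (h2 T) <= r ->
  forall t, 0 <= t <= T -> forall s,
  d (h1 (s + t)) (h2 (s + t)) <= (Aa r * exp (- (T - t) / 2) + 4 * exp (- t / 2)) * exp (Rabs s / 2).
Proof.
  intros Hcat H0 HT Hr HTr t Ht s.
  pose proof Hcat as [Hm _].
  rewrite Rmult_plus_distr_r, !Rmult_assoc, <- !exp_plus.
  pose proof (Kc_ge1 Hr) as HK. unfold Aa.
  assert (P1 : 0 <= exp (- t / 2 + Rabs s / 2)) by (left; apply exp_pos).
  assert (P2 : 0 <= exp (- (T - t) / 2 + Rabs s / 2)) by (left; apply exp_pos).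
  set (u := s + t).
  destruct (Rle_or_lt 0 u) as [Hu0|Hu0]; [destruct (Rle_or_lt u T) as [HuT|HuT]|].
  - pose proof (geo_bound h1 h2 Hcat H0 HT Hr HTr (conj Hu0 HuT)) as G.
    assert (exp (u - T) <= exp (- (T - t) / 2 + Rabs s / 2)).
    { apply exp_le. unfold u in *. unfold Rabs; destruct Rcase_abs; lra. }
    assert (Kc r * exp (u - T) <= (Kc r + r + 4) * exp (- (T - t) / 2 + Rabs s / 2)).
    { apply Rmult_le_compat; try lra; left; apply exp_pos. }
    nra.
  - pose proof (d_tri Hm (h1 u) (h1 T) (h2 u)). pose proof (d_tri Hm (h1 T) (h2 T) (h2 u)).
    rewrite !geoP in *. rewrite Rabs_right in * by lra. rewrite Rabs_left1 in * by lra.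
    pose proof (exp_ineq1_le ((u - T) / 2)).
    assert (exp ((u - T) / 2) <= exp (- (T - t) / 2 + Rabs s / 2)).
    { apply exp_le. unfold u in *. unfold Rabs; destruct Rcase_abs; lra. }
    assert (1 <= exp ((u - T) / 2)) by (apply exp_ge1; lra).
    assert (r <= r * exp ((u - T) / 2)) by nra.
    assert ((r + 4) * exp ((u - T) / 2) <= (Kc r + r + 4) * exp (- (T - t) / 2 + Rabs s / 2)).
    { apply Rmult_le_compat; try lra; left; apply exp_pos. }
    nra.
  - pose proof (d_tri Hm (h1 u) (h1 0) (h2 u)) as E. rewrite (geoP h1 u 0) in E.
    rewrite H0, (geoP h2 0 u) in E.
    rewrite Rabs_left in E by lra. rewrite Rabs_right in E by lra.
    pose proof (exp_ineq1_le (- u / 2)).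
    assert (exp (- u / 2) <= exp (- t / 2 + Rabs s / 2)).
    { apply exp_le. unfold u in *. unfold Rabs; destruct Rcase_abs; lra. }
    assert (0 <= (Kc r + r + 4) * exp (- (T - t) / 2 + Rabs s / 2)) by nra.
    lra.
Qed.

Lemma flow_diff H (d : H -> H -> R) (Phi : SH d -> R) L b :
  is_metric d -> Hoelder Phi L b -> 0 < b ->
  forall h t t', Rabs (Phi (flow t h) - Phi (flow t' h)) <= Rabs L * hpow (8 * Rabs (t - t')) b.
Proof.
  intros Hm Hh Hb h t t'.
  apply Rle_trans with (1 := Hh _ _).
  pose proof (hpow_nonneg (distSH (flow t h) (flow t' h)) b).
  apply Rle_trans with (Rabs L * hpow (distSH (flow t h) (flow t' h)) b).
  { apply Rmult_le_compat_r. lra. apply Rle_abs. }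
  apply Rmult_le_compat_l. apply Rabs_pos. apply hpow_mono. lra.
  apply distSH_bound. exact Hm. apply Rabs_pos.
  intros s. simpl. rewrite geoP. replace (s + t - (s + t')) with (t - t') by ring.
  pose proof (Rabs_pos s). assert (1 <= exp (Rabs s / 2)) by (apply exp_ge1; lra). pose proof (Rabs_pos (t - t')). nra.
Qed.

Lemma flow_cont H (d : H -> H -> R) (Phi : SH d -> R) L b :
  is_metric d -> Hoelder Phi L b -> 0 < b ->
  forall h x, continuous (fun t => Phi (flow t h)) x.
Proof.
  intros Hm Hh Hb h x. apply cont_eps. intros eps He.
  destruct (hpow_small (Rabs_pos L) He Hb) as [del [Hd Hx]].
  exists (del / 8). split. lra. intros y Hy.
  apply Rle_lt_trans with (1 := flow_diff Hm Hh Hb h y x). apply Hx. lra.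
Qed.

Definition Dh (L b r : R) := Rabs L * (Rpower (8 * Aa r) b + Rpower 32 b) * (2 / b).

Lemma int_diff H (d : H -> H -> R) (Phi : SH d -> R) L b (h1 h2 : SH d) T r :
  CAT_m1 d -> Hoelder Phi L b -> 0 < b <= 1 ->
  h1 0 = h2 0 -> 0 < T -> 0 <= r -> d (h1 T) (h2 T) <= r ->
  Rabs (RInt (fun t => Phi (flow t h1)) 0 T - RInt (fun t => Phi (flow t h2)) 0 T) <= Dh L b r.
Proof.
  intros Hcat Hh Hb H0 HT Hr HTr.
  pose proof Hcat as [Hm _].
  set (f1 := fun t => Phi (flow t h1)). set (f2 := fun t => Phi (flow t h2)).
  assert (C1 : forall x, continuous f1 x) by (intros; apply (flow_cont Hm Hh (proj1 Hb))).
  assert (C2 : forall x, continuous f2 x) by (intros; apply (flow_cont Hm Hh (proj1 Hb))).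
  assert (E1 : ex_RInt f1 0 T) by (apply (ex_RInt_continuous (V := R_CompleteNormedModule)); intros; apply C1).
  assert (E2 : ex_RInt f2 0 T) by (apply (ex_RInt_continuous (V := R_CompleteNormedModule)); intros; apply C2).
  assert (Cd : forall x, continuous (fun t => f1 t - f2 t) x).
  { intros x. apply continuity_pt_filterlim. apply continuity_pt_minus; apply continuity_pt_filterlim; [apply C1|apply C2]. }
  assert (Ca : forall x, continuous (fun t => Rabs (f1 t - f2 t)) x).
  { intros x. apply continuous_Rabs_comp. apply Cd. }
  assert (Ed : ex_RInt (fun t => f1 t - f2 t) 0 T)
    by (apply (ex_RInt_continuous (V := R_CompleteNormedModule)); intros; apply Cd).
  assert (Ea : ex_RInt (fun t => Rabs (f1 t - f2 t)) 0 T)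
    by (apply (ex_RInt_continuous (V := R_CompleteNormedModule)); intros; apply Ca).
  assert (EQ : RInt (fun t => f1 t - f2 t) 0 T = RInt f1 0 T - RInt f2 0 T).
  { apply (RInt_minus (V := R_CompleteNormedModule)); auto. }
  rewrite <- EQ.
  apply Rle_trans with (1 := abs_RInt_le _ _ _ (Rlt_le _ _ HT) Ed).
  set (P1 := Rpower (8 * Aa r) b). set (P2 := Rpower 32 b).
  set (g := fun t => Rabs L * (P1 * exp (b * (- (T - t) / 2)) + P2 * exp (b * (- t / 2)))).
  set (G := fun t => Rabs L * (P1 * (2 / b) * exp (b * (- (T - t) / 2)) - P2 * (2 / b) * exp (b * (- t / 2)))).
  assert (Ig : is_RInt g 0 T (G T - G 0)).
  { apply (is_RInt_derive G g 0 T).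
    - intros x _. unfold G, g. auto_derive. auto. unfold Rminus, Rdiv. field. lra.
    - intros y _. apply (@ex_derive_continuous R_AbsRing R_NormedModule). unfold g. auto_derive. auto. }
  apply Rle_trans with (RInt g 0 T).
  { apply RInt_le. lra. exact Ea. eexists; exact Ig.
    intros t Ht.
    assert (HA : 0 < Aa r) by (unfold Aa; pose proof (Kc_ge1 Hr); lra).
    set (M := Aa r * exp (- (T - t) / 2) + 4 * exp (- t / 2)).
    assert (HM : 0 <= M) by (unfold M; pose proof (exp_pos (- (T - t) / 2)); pose proof (exp_pos (- t / 2)); nra).
    assert (Hd : distSH (flow t h1) (flow t h2) <= 8 * M).
    { apply distSH_bound. exact Hm. exact HM. intros s. simpl.
      apply (flow_bound h1 h2 Hcat H0 HT Hr HTr). lra. }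
    unfold f1, f2.
    apply Rle_trans with (1 := Hh _ _).
    pose proof (hpow_nonneg (distSH (flow t h1) (flow t h2)) b).
    apply Rle_trans with (Rabs L * hpow (distSH (flow t h1) (flow t h2)) b).
    { apply Rmult_le_compat_r. lra. apply Rle_abs. }
    unfold g. apply Rmult_le_compat_l. apply Rabs_pos.
    apply Rle_trans with (hpow (8 * M) b). apply hpow_mono; lra.
    replace (8 * M) with ((8 * Aa r) * exp (- (T - t) / 2) + 32 * exp (- t / 2)) by (unfold M; ring).
    apply Rle_trans with (hpow ((8 * Aa r) * exp (- (T - t) / 2)) b + hpow (32 * exp (- t / 2)) b).
    { apply hpow_add. pose proof (exp_pos (- (T - t) / 2)); nra. pose proof (exp_pos (- t / 2)); nra. exact Hb. }
    rewrite !hpow_exp by lra. unfold P1, P2. lra. }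
  rewrite (is_RInt_unique _ _ _ _ Ig). unfold G, Dh.
  fold P1 P2.
  replace (- (T - T) / 2) with 0 by field. replace (- 0 / 2) with 0 by field.
  rewrite !Rmult_0_r, exp_0.
  replace (b * (- (T - 0) / 2)) with (b * (- T / 2)) by (f_equal; field).
  assert (Ex : 0 < exp (b * (- T / 2))) by apply exp_pos.
  assert (P1p : 0 < P1) by apply Rpower_pos. assert (P2p : 0 < P2) by apply Rpower_pos.
  assert (0 < 2 / b) by (apply Rdiv_lt_0_compat; lra).
  pose proof (Rabs_pos L).
  assert (Rabs L * (P1 * (2 / b) * 1 - P2 * (2 / b) * exp (b * (- T / 2))) -
    Rabs L * (P1 * (2 / b) * exp (b * (- T / 2)) - P2 * (2 / b) * 1) =
    Rabs L * (2 / b) * (P1 + P2) - Rabs L * (2 / b) * ((P1 + P2) * exp (b * (- T / 2)))) by ring.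
  assert (0 <= Rabs L * (2 / b) * ((P1 + P2) * exp (b * (- T / 2)))).
  { apply Rmult_le_pos. apply Rmult_le_pos; lra. nra. }
  lra.
Qed.

Lemma dPhi_spec H (d : H -> H -> R) (Phi : SH d -> R) (g : SH d) T :
  is_metric d -> 0 < T ->
  exists h : SH d, h 0 = g 0 /\ h T = g T /\
    dPhi Phi (g 0) (g T) = RInt (fun t => Phi (flow t h)) 0 T.
Proof.
  intros Hm HT.
  assert (Hd : d (g 0) (g T) = T) by (rewrite geoP, Rminus_0_l, Rabs_Ropp, Rabs_right; lra).
  assert (Hne : g 0 <> g T).
  { intros E. rewrite E, (d_refl Hm) in Hd. lra. }
  unfold dPhi.
  match goal with |- context [epsilon ?i ?P] => 
    assert (Ex : exists v, P v); [|pose proof (epsilon_spec i P Ex) as S; set (v := epsilon i P) in *] end.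
  { exists (RInt (fun t => Phi (flow t g)) 0 (d (g 0) (g T))). right. split. exact Hne.
    exists g. repeat split; auto. rewrite Hd; reflexivity. }
  destruct S as [[E _]|[_ [h [Ha [Hb Hc]]]]]. contradiction.
  rewrite Hd in Hb, Hc. exists h. auto.
Qed.

Theorem lemma4p2 :
  forall L beta : R, 0 < beta -> beta <= 1 ->
  exists Dhat : R -> R,
  forall (H : Type) (d : H -> H -> R),
    CAT_m1 d -> geodesically_complete d ->
  forall Phi : SH d -> R,
    in_calH Phi -> Hoelder Phi L beta ->
  forall (p : H) (g1 g2 : SH d) (T r : R),
    g1 0 = p -> g2 0 = p -> 0 <= T -> 0 <= r ->
    d (g1 T) (g2 T) <= r ->
    Rabs (dPhi Phi p (g1 T) - dPhi Phi p (g2 T)) <= Dhat r.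
Proof.
  intros L beta Hb1 Hb2. exists (fun r => Dh L beta r).
  intros H d Hcat _ Phi _ Hh p g1 g2 T r H1 H2 HT Hr Hd.
  pose proof Hcat as [Hm _].
  destruct HT as [HT|HT].
  - destruct (dPhi_spec Phi g1 Hm HT) as [h1 [A1 [B1 C1]]].
    destruct (dPhi_spec Phi g2 Hm HT) as [h2 [A2 [B2 C2]]].
    rewrite H1 in A1, C1. rewrite H2 in A2, C2. rewrite C1, C2.
    eapply int_diff; [exact Hcat|exact Hh|exact (conj Hb1 Hb2)|..].
    congruence. exact HT. exact Hr. rewrite B1, B2. exact Hd.
  - subst T. rewrite H1, H2, Rminus_diag, Rabs_R0. unfold Dh.
    apply Rmult_le_pos. apply Rmult_le_pos. apply Rabs_pos.
    pose proof (Rpower_pos (8 * Aa r) beta). pose proof (Rpower_pos 32 beta). lra.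
    left; apply Rdiv_lt_0_compat; lra.
Qed.
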